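(* Let $(V,L,\varphi,E)$ be a valuation system. If $\varphi$ is $\Pi_{\aleph_1}$-extendible, then the hierarchy has collapsed at $\Pi_{\aleph_1}\varphi$.
   Context: $\aleph_1$ denotes the smallest uncountable ordinal. A valuation system $(V,L,\varphi,E)$ consists of: (i) a lattice $V$ which is $\sigma$-distributive (for every $a\in V$ and sequence $(b_n)$ with existing infimum, $\bigwedge_n(a\vee b_n)$ exists and equals $a\vee\bigwedge_n b_n$, and dually for suprema); (ii) a sublattice $L$ of $V$; (iii) a partially ordered abelian group $E$ which is R-complete (whenever $x_1\ge x_2\ge\cdots$ and $y_1\ge y_2\ge\cdots$ in $E$ are such that $\bigwedge_n(x_n+y_n)$ exists, $\bigwedge_n x_n$ and $\bigwedge_n y_n$ exist; dually for increasing sequences); (iv) a valuation $\varphi:L\to E$ (order-preserving, $\varphi(a\wedge b)+\varphi(a\vee b)=\varphi(a)+\varphi(b)$). A decreasing (resp. increasing) sequence $(a_n)$ in $L$ is $\varphi$-convergent if $\bigwedge_n a_n$ exists in $V$ and $\bigwedge_n\varphi(a_n)$ exists in $E$ (resp. with suprema). $\Pi L:=\{\bigwedge_n a_n:(a_n)\ \varphi\text{-convergent decreasing}\}$ and $\varphi$ is $\Pi$-extendible if there is a valuation $\Pi\varphi:\Pi L\to E$ with $\Pi\varphi(\bigwedge_n a_n)=\bigwedge_n\varphi(a_n)$ for all such sequences; $\Sigma L,\Sigma$-extendible, $\Sigma\varphi$ dually. Hierarchy (transfinite recursion): $\Pi_0\varphi=\Sigma_0\varphi=\varphi$ on $L$;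 $\varphi$ is $\Pi_{\alpha+1}$-extendible iff it is $\Sigma_\alpha$-extendible and $\Sigma_\alpha\varphi$ is $\Pi$-extendible, with $\Pi_{\alpha+1}L=\Pi(\Sigma_\alpha L)$, $\Pi_{\alpha+1}\varphi=\Pi(\Sigma_\alpha\varphi)$; $\varphi$ is $\Sigma_{\alpha+1}$-extendible iff it is $\Pi_\alpha$-extendible and $\Pi_\alpha\varphi$ is $\Sigma$-extendible, with $\Sigma_{\alpha+1}\varphi=\Sigma(\Pi_\alpha\varphi)$; at a limit $\lambda$, $\varphi$ is $\Pi_\lambda$-extendible iff $\Pi_\alpha$-extendible for all $\alpha<\lambda$, and then $\Pi_\lambda L=\bigcup_{\alpha<\lambda}\Pi_\alpha L$ with $\Pi_\lambda\varphi(c)=\Pi_\beta\varphi(c)$ for $c\in\Pi_\beta L$; similarly $\Sigma_\lambda$. The hierarchy has collapsed at $Q$, where $Q=\Pi_\alpha\varphi$ or $Q=\Sigma_\alpha\varphi$, if $\varphi$ is $\Pi_{\alpha+1}$- and $\Sigma_{\alpha+1}$-extendible and $\Pi(Q)=Q=\Sigma(Q)$ (i.e. $Q$ is $\Pi$- and $\Sigma$-extendible with $\Pi Q=Q=\Sigma Q$). *)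

(* Defs.v *)
From HB Require Import structures.
From mathcomp Require Import all_boot all_order all_algebra.
From Stdlib Require Import ClassicalEpsilon Wellfounded.

Set Implicit Arguments.
Unset Strict Implicit.
Unset Printing Implicit Defensive.

Import Order.LTheory GRing.Theory.
Local Open Scope ring_scope.

Section Bounds.
Context {d : Order.disp_t} {T : porderType d}.

Definition is_inf (S : T -> Prop) (x : T) : Prop :=
  (forall y, S y -> (x <= y)%O) /\
  (forall z, (forall y, S y -> (z <= y)%O) -> (z <= x)%O).

Definition is_sup (S : T -> Prop) (x : T) : Prop :=
  (forall y, S y -> (y <= x)%O) /\
  (forall z, (forall y, S y -> (y <= z)%O) -> (x <= z)%O).

Definition seq_inf (a : nat -> T) (x : T) : Prop := is_inf (fun y => exists n, y = a n) x.
Definition seq_sup (a : nat -> T) (x : T) : Prop := is_sup (fun y => exists n, y = a n) x.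

Definition decreasing (a : nat -> T) : Prop := forall n, (a n.+1 <= a n)%O.
Definition increasing (a : nat -> T) : Prop := forall n, (a n <= a n.+1)%O.
End Bounds.

Definition sigma_distributive {d : Order.disp_t} (V : latticeType d) : Prop :=
  forall (a : V) (b : nat -> V),
    (forall c, seq_inf b c -> seq_inf (fun n => Order.join a (b n)) (Order.join a c)) /\
    (forall c, seq_sup b c -> seq_sup (fun n => Order.meet a (b n)) (Order.meet a c)).

Definition sublattice {d : Order.disp_t} {V : latticeType d} (L : V -> Prop) : Prop :=
  forall a b, L a -> L b -> L (Order.meet a b) /\ L (Order.join a b).

Definition po_group (E : porderZmodType) : Prop :=
  forall x y z : E, (x <= y)%O -> (x + z <= y + z)%O.

Definition R_complete (E : porderZmodType) : Prop :=
  (forall x y : nat -> E, decreasing x -> decreasing y ->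
     (exists z, seq_inf (fun n => x n + y n) z) ->
     (exists z, seq_inf x z) /\ (exists z, seq_inf y z)) /\
  (forall x y : nat -> E, increasing x -> increasing y ->
     (exists z, seq_sup (fun n => x n + y n) z) ->
     (exists z, seq_sup x z) /\ (exists z, seq_sup y z)).

(* (iv) valuation on a subset D of V (D is meant to be a sublattice) *)
Definition valuation {d : Order.disp_t} {V : latticeType d} {E : porderZmodType}
  (D : V -> Prop) (psi : V -> E) : Prop :=
  (forall a b, D a -> D b -> (a <= b)%O -> (psi a <= psi b)%O) /\
  (forall a b, D a -> D b ->
     psi (Order.meet a b) + psi (Order.join a b) = psi a + psi b).

Section Ext.
Context {d : Order.disp_t} {V : latticeType d} {E : porderZmodType}.
Implicit Types (D : V -> Prop) (f : V -> E).

Definition conv_dec D f (a : nat -> V) : Prop :=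
  (forall n, D (a n)) /\ decreasing a /\
  (exists c, seq_inf a c) /\ (exists e, seq_inf (fun n => f (a n)) e).

Definition conv_inc D f (a : nat -> V) : Prop :=
  (forall n, D (a n)) /\ increasing a /\
  (exists c, seq_sup a c) /\ (exists e, seq_sup (fun n => f (a n)) e).

Definition PiSet D f : V -> Prop := fun c => exists a, conv_dec D f a /\ seq_inf a c.
Definition SigSet D f : V -> Prop := fun c => exists a, conv_inc D f a /\ seq_sup a c.

Definition Pi_extendible D f : Prop :=
  exists psi : V -> E,
    sublattice (PiSet D f) /\ valuation (PiSet D f) psi /\
    (forall a c e, conv_dec D f a -> seq_inf a c ->
        seq_inf (fun n => f (a n)) e -> psi c = e).

Definition Sig_extendible D f : Prop :=
  exists psi : V -> E,
    sublattice (SigSet D f) /\ valuation (SigSet D f) psi /\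
    (forall a c e, conv_inc D f a -> seq_sup a c ->
        seq_sup (fun n => f (a n)) e -> psi c = e).

(* the values of Pi f and Sigma f (uniquely determined when extendible) *)
Definition Pi_val D f : V -> E := fun c =>
  epsilon (inhabits 0) (fun e => exists a, conv_dec D f a /\ seq_inf a c /\
                                     seq_inf (fun n => f (a n)) e).
Definition Sig_val D f : V -> E := fun c =>
  epsilon (inhabits 0) (fun e => exists a, conv_inc D f a /\ seq_sup a c /\
                                     seq_sup (fun n => f (a n)) e).

(* A level of the hierarchy: (is extendible up to here, domain, valuation) *)
Record level := Level { lext : Prop; ldom : V -> Prop; lval : V -> E }.

Definition PiL (Q : level) : level :=
  Level (lext Q /\ Pi_extendible (ldom Q) (lval Q))
        (PiSet (ldom Q) (lval Q)) (Pi_val (ldom Q) (lval Q)).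
Definition SigL (Q : level) : level :=
  Level (lext Q /\ Sig_extendible (ldom Q) (lval Q))
        (SigSet (ldom Q) (lval Q)) (Sig_val (ldom Q) (lval Q)).

Definition limL (I : Type) (g : I -> level) : level :=
  Level (forall i, lext (g i)) (fun c => exists i, ldom (g i) c)
        (fun c => match excluded_middle_informative (exists i, ldom (g i) c) with
                  | left h => lval (g (proj1_sig (constructive_indefinite_description _ h))) c
                  | right _ => 0
                  end).

(* Hierarchy indexed by a well-founded (total) strict order R on W:
   hier a = (Pi_a, Sigma_a). *)
Section Hier.
Variables (W : Type) (R : W -> W -> Prop) (wfR : well_founded R)
          (L : V -> Prop) (phi : V -> E).

Definition base_level : level := Level True L phi.

Definition hier_step (a : W) (rec : forall b, R b a -> level * level) : level * level :=
  match excluded_middle_informative (exists b, R b a) with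
  | right _ => (base_level, base_level)
  | left _ =>
    match excluded_middle_informative
            (exists b, R b a /\ forall g, R g a -> ~ R b g) with
    | left hs =>                                              (* a = b + 1 *)
      let b := proj1_sig (constructive_indefinite_description _ hs) in
      let hb := proj1 (proj2_sig (constructive_indefinite_description _ hs)) in
      let p := rec b hb in (PiL p.2, SigL p.1)
    | right _ =>                                              (* a limit *)
      (limL (fun s : {b | R b a} => (rec (proj1_sig s) (proj2_sig s)).1),
       limL (fun s : {b | R b a} => (rec (proj1_sig s) (proj2_sig s)).2))
    end
  end.

Definition hier : W -> level * level := Fix wfR (fun _ => (level * level)%type) hier_step.

(* Pi_lambda and Sigma_lambda where lambda is the order type of W (a limit) *)
Definition Pi_top : level := limL (fun a => (hier a).1).
Definition Sig_top : level := limL (fun a => (hier a).2).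
End Hier.

(* The hierarchy has collapsed at Q (= Pi_al or Sigma_al), given
   PiA = Pi_al and SigA = Sigma_al : phi is Pi_{al+1}- and Sigma_{al+1}-
   extendible, Q is Pi- and Sigma-extendible and Pi Q = Q = Sigma Q. *)
Definition collapsed_at (PiA SigA Q : level) : Prop :=
  lext (PiL SigA) /\ lext (SigL PiA) /\
  Pi_extendible (ldom Q) (lval Q) /\ Sig_extendible (ldom Q) (lval Q) /\
  (forall c, PiSet (ldom Q) (lval Q) c <-> ldom Q c) /\
  (forall c, ldom Q c -> Pi_val (ldom Q) (lval Q) c = lval Q c) /\
  (forall c, SigSet (ldom Q) (lval Q) c <-> ldom Q c) /\
  (forall c, ldom Q c -> Sig_val (ldom Q) (lval Q) c = lval Q c).
End Ext.

(* (W, R) has order type aleph_1 = omega_1: a strict well-order whose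
   carrier is uncountable and all of whose proper initial segments are
   countable. *)
Definition countable_set {W : Type} (S : W -> Prop) : Prop :=
  exists f : W -> nat, forall x y, S x -> S y -> f x = f y -> x = y.

Definition omega1_order {W : Type} (R : W -> W -> Prop) : Prop :=
  well_founded R /\
  (forall x y z, R x y -> R y z -> R x z) /\
  (forall x y, R x y \/ x = y \/ R y x) /\
  ~ countable_set (fun _ : W => True) /\
  (forall a, countable_set (fun b => R b a)).

(* Main.v *)
Require Import Defs.
From HB Require Import structures.
From mathcomp Require Import all_boot all_order all_algebra.
From Stdlib Require Import ClassicalEpsilon Classical FunctionalExtensionality.

Set Implicit Arguments.
Unset Strict Implicit.
Unset Printing Implicit Defensive.
Import Order.LTheory.

Lemma inf_const {d} {T : porderType d} (x : T) : seq_inf (fun _ => x) x.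
Proof. split; [by move=> y [n ->] | by move=> z H; apply: H; exists 0%N]. Qed.

Lemma sup_const {d} {T : porderType d} (x : T) : seq_sup (fun _ => x) x.
Proof. split; [by move=> y [n ->] | by move=> z H; apply: H; exists 0%N]. Qed.

Section G.
Context {d : Order.disp_t} {V : latticeType d} {E : porderZmodType}.
Implicit Types (D : V -> Prop) (f : V -> E).

Lemma Pi_val_spec D f c : PiSet D f c ->
  exists a, conv_dec D f a /\ seq_inf a c /\ seq_inf (fun n => f (a n)) (Pi_val D f c).
Proof.
case=> a [Ha Hc]. have Ha' := Ha. case: Ha' => _ [_ [_ [e He]]].
have ex : exists e, exists a, conv_dec D f a /\ seq_inf a c /\ seq_inf (fun n => f (a n)) e.
  by exists e, a.
exact: (epsilon_spec (inhabits 0%R) _ ex).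
Qed.

Lemma Sig_val_spec D f c : SigSet D f c ->
  exists a, conv_inc D f a /\ seq_sup a c /\ seq_sup (fun n => f (a n)) (Sig_val D f c).
Proof.
case=> a [Ha Hc]. have Ha' := Ha. case: Ha' => _ [_ [_ [e He]]].
have ex : exists e, exists a, conv_inc D f a /\ seq_sup a c /\ seq_sup (fun n => f (a n)) e.
  by exists e, a.
exact: (epsilon_spec (inhabits 0%R) _ ex).
Qed.

Lemma Pi_val_wit D f a c e : Pi_extendible D f -> conv_dec D f a -> seq_inf a c ->
  seq_inf (fun n => f (a n)) e -> Pi_val D f c = e.
Proof.
move=> [psi [_ [_ Hpsi]]] Ha Hc He.
have [a' [Ha' [Hc' He']]] := @Pi_val_spec D f c (ex_intro _ a (conj Ha Hc)).
by rewrite -(Hpsi _ _ _ Ha' Hc' He') (Hpsi _ _ _ Ha Hc He).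
Qed.

Lemma Sig_val_wit D f a c e : Sig_extendible D f -> conv_inc D f a -> seq_sup a c ->
  seq_sup (fun n => f (a n)) e -> Sig_val D f c = e.
Proof.
move=> [psi [_ [_ Hpsi]]] Ha Hc He.
have [a' [Ha' [Hc' He']]] := @Sig_val_spec D f c (ex_intro _ a (conj Ha Hc)).
by rewrite -(Hpsi _ _ _ Ha' Hc' He') (Hpsi _ _ _ Ha Hc He).
Qed.

Lemma conv_dec_const D f x : D x -> conv_dec D f (fun _ => x).
Proof.
move=> Hx; split; first by [].
split; first by move=> n; exact: le_refl.
split; [exists x; exact: inf_const | exists (f x); exact: inf_const].
Qed.

Lemma conv_inc_const D f x : D x -> conv_inc D f (fun _ => x).
Proof.
move=> Hx; split; first by [].
split; first by move=> n; exact: le_refl.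
split; [exists x; exact: sup_const | exists (f x); exact: sup_const].
Qed.

Lemma PiSet_self D f x : D x -> PiSet D f x.
Proof. move=> Hx; exists (fun _ => x); split; [exact: conv_dec_const | exact: inf_const]. Qed.

Lemma SigSet_self D f x : D x -> SigSet D f x.
Proof. move=> Hx; exists (fun _ => x); split; [exact: conv_inc_const | exact: sup_const]. Qed.

Lemma Pi_val_self D f x : Pi_extendible D f -> D x -> Pi_val D f x = f x.
Proof.
move=> He Hx; apply: (@Pi_val_wit D f (fun _ => x)) => //;
  [exact: conv_dec_const | exact: inf_const | exact: inf_const].
Qed.

Lemma Sig_val_self D f x : Sig_extendible D f -> D x -> Sig_val D f x = f x.
Proof.
move=> He Hx; apply: (@Sig_val_wit D f (fun _ => x)) => //;
  [exact: conv_inc_const | exact: sup_const | exact: sup_const].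
Qed.

Lemma Pi_good D f : Pi_extendible D f ->
  sublattice (PiSet D f) /\ valuation (PiSet D f) (Pi_val D f).
Proof.
move=> Hext; have Hext' := Hext; case: Hext' => psi [Hsub [[Hmon Hmod] Hpsi]].
have Heq : forall c, PiSet D f c -> psi c = Pi_val D f c.
  move=> c /Pi_val_spec [a [Ha [Hc He]]]; exact: Hpsi Ha Hc He.
split; first by [].
split.
- move=> a b Ha Hb Hab; rewrite -!Heq //; exact: Hmon.
- move=> a b Ha Hb; have [Hm Hj] := Hsub a b Ha Hb.
  rewrite -!Heq //; exact: Hmod.
Qed.

Lemma Sig_good D f : Sig_extendible D f ->
  sublattice (SigSet D f) /\ valuation (SigSet D f) (Sig_val D f).
Proof.
move=> Hext; have Hext' := Hext; case: Hext' => psi [Hsub [[Hmon Hmod] Hpsi]].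
have Heq : forall c, SigSet D f c -> psi c = Sig_val D f c.
  move=> c /Sig_val_spec [a [Ha [Hc He]]]; exact: Hpsi Ha Hc He.
split; first by [].
split.
- move=> a b Ha Hb Hab; rewrite -!Heq //; exact: Hmon.
- move=> a b Ha Hb; have [Hm Hj] := Hsub a b Ha Hb.
  rewrite -!Heq //; exact: Hmod.
Qed.

Lemma conv_dec_mono D f D' f' a : (forall x, D x -> D' x /\ f' x = f x) ->
  conv_dec D f a -> conv_dec D' f' a /\ (fun n => f' (a n)) = (fun n => f (a n)).
Proof.
move=> Hs [HD [Hd [Hc [e He]]]].
have Hf : (fun n => f' (a n)) = (fun n => f (a n)).
  by apply: functional_extensionality => n; case: (Hs _ (HD n)).
split=> //; split; first by move=> n; case: (Hs _ (HD n)).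
by split=> //; split=> //; exists e; rewrite Hf.
Qed.

Lemma conv_inc_mono D f D' f' a : (forall x, D x -> D' x /\ f' x = f x) ->
  conv_inc D f a -> conv_inc D' f' a /\ (fun n => f' (a n)) = (fun n => f (a n)).
Proof.
move=> Hs [HD [Hd [Hc [e He]]]].
have Hf : (fun n => f' (a n)) = (fun n => f (a n)).
  by apply: functional_extensionality => n; case: (Hs _ (HD n)).
split=> //; split; first by move=> n; case: (Hs _ (HD n)).
by split=> //; split=> //; exists e; rewrite Hf.
Qed.

Lemma PiSet_mono D f D' f' c : (forall x, D x -> D' x /\ f' x = f x) ->
  PiSet D f c -> PiSet D' f' c /\ (Pi_extendible D' f' -> Pi_val D' f' c = Pi_val D f c).
Proof.
move=> Hs /Pi_val_spec [a [Ha [Hc He]]].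
have [Ha' Hf] := conv_dec_mono Hs Ha.
split; first by exists a.
move=> Hext; apply: (Pi_val_wit Hext Ha' Hc); by rewrite Hf.
Qed.

Lemma SigSet_mono D f D' f' c : (forall x, D x -> D' x /\ f' x = f x) ->
  SigSet D f c -> SigSet D' f' c /\ (Sig_extendible D' f' -> Sig_val D' f' c = Sig_val D f c).
Proof.
move=> Hs /Sig_val_spec [a [Ha [Hc He]]].
have [Ha' Hf] := conv_inc_mono Hs Ha.
split; first by exists a.
move=> Hext; apply: (Sig_val_wit Hext Ha' Hc); by rewrite Hf.
Qed.

End G.
Section Lv.
Context {d : Order.disp_t} {V : latticeType d} {E : porderZmodType}.

Definition lsub (P Q : @level d V E) : Prop :=
  forall x, ldom P x -> ldom Q x /\ lval Q x = lval P x.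

Lemma lsub_refl P : lsub P P.
Proof. by move=> x Hx. Qed.

Lemma lsub_trans P Q S : lsub P Q -> lsub Q S -> lsub P S.
Proof.
move=> H1 H2 x Hx; have [Hq Eq] := H1 x Hx; have [Hs Es] := H2 x Hq.
by split=> //; rewrite Es Eq.
Qed.

Lemma lsub_PiL P Q : lsub P Q -> Pi_extendible (ldom Q) (lval Q) -> lsub (PiL P) (PiL Q).
Proof. move=> H Hx x Hp; have [A B] := PiSet_mono H Hp; split=> //=; exact: B. Qed.

Lemma lsub_SigL P Q : lsub P Q -> Sig_extendible (ldom Q) (lval Q) -> lsub (SigL P) (SigL Q).
Proof. move=> H Hx x Hp; have [A B] := SigSet_mono H Hp; split=> //=; exact: B. Qed.

Lemma lsub_PiL_self Q : Pi_extendible (ldom Q) (lval Q) -> lsub Q (PiL Q).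
Proof. move=> He x Hx; split; [exact: PiSet_self | exact: Pi_val_self]. Qed.

Lemma lsub_SigL_self Q : Sig_extendible (ldom Q) (lval Q) -> lsub Q (SigL Q).
Proof. move=> He x Hx; split; [exact: SigSet_self | exact: Sig_val_self]. Qed.

Lemma limL_chosen I (F : I -> @level d V E) x : ldom (limL F) x ->
  exists j, ldom (F j) x /\ lval (limL F) x = lval (F j) x.
Proof.
move=> Hx; rewrite /limL /=.
case: (excluded_middle_informative _) => [h|h]; last by [].
exists (proj1_sig (constructive_indefinite_description _ h)); split=> //.
exact: (proj2_sig (constructive_indefinite_description _ h)).
Qed.

Lemma limL_sub I (F : I -> @level d V E) Q : (forall i, lsub (F i) Q) -> lsub (limL F) Q.
Proof.
move=> H x Hx; have [j [Hj Ej]] := limL_chosen Hx.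
have [A B] := H j x Hj; by split=> //; rewrite Ej.
Qed.

Lemma sub_limL I (F : I -> @level d V E) i :
  (forall j x, ldom (F i) x -> ldom (F j) x -> lval (F j) x = lval (F i) x) ->
  lsub (F i) (limL F).
Proof.
move=> Hc x Hx; have Hl : ldom (limL F) x by exists i.
have [j [Hj Ej]] := limL_chosen Hl; split=> //; rewrite Ej; exact: Hc.
Qed.

End Lv.
Section H.
Context {d : Order.disp_t} {V : latticeType d} {E : porderZmodType} {W : Type}
  (R : W -> W -> Prop) (wfR : well_founded R) (L : V -> Prop) (phi : V -> E).
Local Notation H := (hier wfR L phi).

Lemma hier_unfold a : H a = @hier_step d V E W R L phi a (fun b _ => H b).
Proof.
rewrite /hier; apply: Fix_eq => x f g Hfg.
have -> : f = g; last by [].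
apply: functional_extensionality_dep => y; apply: functional_extensionality => p; exact: Hfg.
Qed.

Lemma hier_cases a :
  (~ (exists b, R b a) /\ H a = (base_level L phi, base_level L phi)) \/
  (exists b, R b a /\ (forall g, R g a -> ~ R b g) /\ H a = (PiL (H b).2, SigL (H b).1)) \/
  ((exists b, R b a) /\ (forall b, R b a -> exists g, R g a /\ R b g) /\
    H a = (limL (fun s : {b | R b a} => (H (proj1_sig s)).1),
           limL (fun s : {b | R b a} => (H (proj1_sig s)).2))).
Proof.
rewrite hier_unfold /hier_step.
case: (excluded_middle_informative _) => [h1|h1]; last by left.
case: (excluded_middle_informative _) => [hs|hs].
  right; left.
  exists (proj1_sig (constructive_indefinite_description _ hs)).
  have spec := proj2_sig (constructive_indefinite_description _ hs).
  split; first exact: (proj1 spec).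
  split; first exact: (proj2 spec).
  by [].
right; right; split=> //; split=> //.
move=> b Hb; apply: NNPP => Hn; apply: hs; exists b; split=> // g Hg Hbg.
by apply: Hn; exists g.
Qed.

Lemma wf_min (P : W -> Prop) : (exists x, P x) -> exists x, P x /\ forall y, R y x -> ~ P y.
Proof.
move=> [x Px]; apply: NNPP => Hn; move: Px; elim/(well_founded_ind wfR): x => x IH Px.
apply: Hn; exists x; split=> // y Ry Py; exact: IH y Ry Py.
Qed.

Hypothesis Hord : omega1_order R.

Lemma R_trans x y z : R x y -> R y z -> R x z.
Proof. by case: Hord => _ [Ht _]; exact: Ht. Qed.

Lemma R_tri x y : R x y \/ x = y \/ R y x.
Proof. by case: Hord => _ [_ [Ht _]]; exact: Ht. Qed.

Lemma R_irr x : ~ R x x.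
Proof. move=> Rx; have [y [H1 H2]] := @wf_min (fun z => R z z) (ex_intro _ x Rx). exact: (H2 y H1 H1). Qed.

Lemma succ_exists a : exists a', R a a' /\ forall g, R g a' -> ~ R a g.
Proof.
have ne : exists b, R a b.
  apply: NNPP => Hn; case: Hord => _ [_ [_ [Hunc Hcnt]]]; apply: Hunc.
  have [f Hf] := Hcnt a.
  have Hl : forall b, b <> a -> R b a.
    move=> b nb; case: (R_tri b a) => [//|[//|Rab]]; by case: Hn; exists b.
  exists (fun b => if excluded_middle_informative (b = a) then 0%N else (f b).+1) => x y _ _.
  case: (excluded_middle_informative _) => [Ex|nxa];
    case: (excluded_middle_informative _) => [Ey|nya] //.
  - move=> _; by rewrite Ex Ey.
  - move=> [Exy]; apply: Hf => //; exact: Hl.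
have [a' [Ra' Hm]] := wf_min ne.
exists a'; split=> // g Rg Rag; exact: Hm g Rg Rag.
Qed.

Lemma bound (i : nat -> W) : exists a, forall n, R (i n) a.
Proof.
apply: NNPP => Hn; case: Hord => _ [_ [_ [Hunc Hcnt]]]; apply: Hunc.
have Hall : forall a, exists n, a = i n \/ R a (i n).
  move=> a; apply: NNPP => H1; apply: Hn; exists a => n.
  case: (R_tri (i n) a) => [//|[E1|E1]]; case: H1; exists n; [left|right]; by [].
pose fs n := proj1_sig (constructive_indefinite_description _ (Hcnt (i n))).
have Hfs : forall n x y, R x (i n) -> R y (i n) -> fs n x = fs n y -> x = y.
  move=> n; exact: (proj2_sig (constructive_indefinite_description _ (Hcnt (i n)))).
pose na a := proj1_sig (constructive_indefinite_description _ (Hall a)).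
have Hna : forall a, a = i (na a) \/ R a (i (na a)).
  move=> a; exact: (proj2_sig (constructive_indefinite_description _ (Hall a))).
exists (fun a => pickle (na a, if excluded_middle_informative (a = i (na a)) then 0%N
                              else (fs (na a) a).+1)) => x y _ _.
move: (Hna x) (Hna y); move: (na x) (na y) => m1 m2 Hx Hy /(pcan_inj pickleK_inv) [E1]; subst m2.
case: (excluded_middle_informative _) => [Ex|Ex];
  case: (excluded_middle_informative _) => [Ey|Ey] //.
- move=> _; by rewrite Ex Ey.
- move=> [Exy]; apply: (Hfs m1) => //; [by case: Hx | by case: Hy].
Qed.

End H.
Section Close.
Context {d : Order.disp_t} {V : latticeType d} {E : porderZmodType} {W : Type}.

Lemma Pi_close (D : V -> Prop) (f : V -> E) (S : W -> @level d V E) :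
  (forall a, Pi_extendible (ldom (S a)) (lval (S a))) ->
  (forall s : nat -> V, (forall n, D (s n)) ->
     exists a, forall n, ldom (S a) (s n) /\ f (s n) = lval (S a) (s n)) ->
  (forall a c, PiSet (ldom (S a)) (lval (S a)) c -> D c /\ f c = Pi_val (ldom (S a)) (lval (S a)) c) ->
  Pi_extendible D f /\ (forall c, PiSet D f c <-> D c) /\ (forall c, D c -> Pi_val D f c = f c).
Proof.
move=> HX HA HB.
have key : forall s c e, conv_dec D f s -> seq_inf s c ->
    seq_inf (fun n => f (s n)) e -> D c /\ f c = e.
  move=> s c e [HD [Hdec [Hc He']]] Hinf Hfe.
  have [a Ha] := HA s HD.
  have Hf : (fun n => f (s n)) = (fun n => lval (S a) (s n)).
    by apply: functional_extensionality => n; case: (Ha n).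
  have Hcv : conv_dec (ldom (S a)) (lval (S a)) s.
    split; first by move=> n; case: (Ha n).
    by split=> //; split=> //; exists e; rewrite -Hf.
  have [Dc Ec] := HB a c (ex_intro _ s (conj Hcv Hinf)).
  split=> //; rewrite Ec; apply: (Pi_val_wit (HX a) Hcv Hinf); by rewrite -Hf.
have Hiff : forall c, PiSet D f c <-> D c.
  move=> c; split; last exact: PiSet_self.
  case=> s [Hs Hinf]; have Hs' := Hs; case: Hs' => _ [_ [_ [e He]]].
  by case: (key s c e Hs Hinf He).
have pair2 : forall x y, D x -> D y -> exists a, ldom (S a) x /\ ldom (S a) y /\
     f x = Pi_val (ldom (S a)) (lval (S a)) x /\ f y = Pi_val (ldom (S a)) (lval (S a)) y.
  move=> x y Dx Dy.
  have [a Ha] := HA (fun n => if n is 0%N then x else y) (fun n => if n is 0%N then Dx else Dy).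
  have [Hx Ex] := Ha 0%N; have [Hy Ey] := Ha 1%N.
  exists a; split=> //; split=> //; rewrite (Pi_val_self (HX a) Hx) (Pi_val_self (HX a) Hy).
  by split.
have Hsl : sublattice D.
  move=> x y Dx Dy; have [a [Hx [Hy _]]] := pair2 x y Dx Dy.
  have [Hsub _] := Pi_good (HX a).
  have [Hm Hj] := Hsub x y (PiSet_self _ Hx) (PiSet_self _ Hy).
  by split; [exact: (HB a _ Hm).1 | exact: (HB a _ Hj).1].
have Hval : valuation D f.
  split.
  - move=> x y Dx Dy Hxy; have [a [Hx [Hy [Ex Ey]]]] := pair2 x y Dx Dy.
    have [_ [Hmon _]] := Pi_good (HX a).
    rewrite Ex Ey; exact: Hmon (PiSet_self _ Hx) (PiSet_self _ Hy) Hxy.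
  - move=> x y Dx Dy; have [a [Hx [Hy [Ex Ey]]]] := pair2 x y Dx Dy.
    have [Hsub [_ Hmod]] := Pi_good (HX a).
    have [Hm Hj] := Hsub x y (PiSet_self _ Hx) (PiSet_self _ Hy).
    rewrite Ex Ey (HB a _ Hm).2 (HB a _ Hj).2; exact: Hmod (PiSet_self _ Hx) (PiSet_self _ Hy).
have Hext : Pi_extendible D f.
  exists f; split.
    move=> x y /Hiff Dx /Hiff Dy; have [A B] := Hsl x y Dx Dy; by split; apply/Hiff.
  split; last by move=> s c e Hs Hinf He; case: (key s c e Hs Hinf He).
  case: Hval => Hmon Hmod; split.
  - move=> x y /Hiff Dx /Hiff Dy; exact: Hmon.
  - move=> x y /Hiff Dx /Hiff Dy; exact: Hmod.
split=> //; split=> // c Dc; exact: Pi_val_self.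
Qed.

Lemma Sig_close (D : V -> Prop) (f : V -> E) (S : W -> @level d V E) :
  (forall a, Sig_extendible (ldom (S a)) (lval (S a))) ->
  (forall s : nat -> V, (forall n, D (s n)) ->
     exists a, forall n, ldom (S a) (s n) /\ f (s n) = lval (S a) (s n)) ->
  (forall a c, SigSet (ldom (S a)) (lval (S a)) c -> D c /\ f c = Sig_val (ldom (S a)) (lval (S a)) c) ->
  Sig_extendible D f /\ (forall c, SigSet D f c <-> D c) /\ (forall c, D c -> Sig_val D f c = f c).
Proof.
move=> HX HA HB.
have key : forall s c e, conv_inc D f s -> seq_sup s c ->
    seq_sup (fun n => f (s n)) e -> D c /\ f c = e.
  move=> s c e [HD [Hdec [Hc He']]] Hinf Hfe.
  have [a Ha] := HA s HD.
  have Hf : (fun n => f (s n)) = (fun n => lval (S a) (s n)).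
    by apply: functional_extensionality => n; case: (Ha n).
  have Hcv : conv_inc (ldom (S a)) (lval (S a)) s.
    split; first by move=> n; case: (Ha n).
    by split=> //; split=> //; exists e; rewrite -Hf.
  have [Dc Ec] := HB a c (ex_intro _ s (conj Hcv Hinf)).
  split=> //; rewrite Ec; apply: (Sig_val_wit (HX a) Hcv Hinf); by rewrite -Hf.
have Hiff : forall c, SigSet D f c <-> D c.
  move=> c; split; last exact: SigSet_self.
  case=> s [Hs Hinf]; have Hs' := Hs; case: Hs' => _ [_ [_ [e He]]].
  by case: (key s c e Hs Hinf He).
have pair2 : forall x y, D x -> D y -> exists a, ldom (S a) x /\ ldom (S a) y /\
     f x = Sig_val (ldom (S a)) (lval (S a)) x /\ f y = Sig_val (ldom (S a)) (lval (S a)) y.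
  move=> x y Dx Dy.
  have [a Ha] := HA (fun n => if n is 0%N then x else y) (fun n => if n is 0%N then Dx else Dy).
  have [Hx Ex] := Ha 0%N; have [Hy Ey] := Ha 1%N.
  exists a; split=> //; split=> //; rewrite (Sig_val_self (HX a) Hx) (Sig_val_self (HX a) Hy).
  by split.
have Hsl : sublattice D.
  move=> x y Dx Dy; have [a [Hx [Hy _]]] := pair2 x y Dx Dy.
  have [Hsub _] := Sig_good (HX a).
  have [Hm Hj] := Hsub x y (SigSet_self _ Hx) (SigSet_self _ Hy).
  by split; [exact: (HB a _ Hm).1 | exact: (HB a _ Hj).1].
have Hval : valuation D f.
  split.
  - move=> x y Dx Dy Hxy; have [a [Hx [Hy [Ex Ey]]]] := pair2 x y Dx Dy.
    have [_ [Hmon _]] := Sig_good (HX a).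
    rewrite Ex Ey; exact: Hmon (SigSet_self _ Hx) (SigSet_self _ Hy) Hxy.
  - move=> x y Dx Dy; have [a [Hx [Hy [Ex Ey]]]] := pair2 x y Dx Dy.
    have [Hsub [_ Hmod]] := Sig_good (HX a).
    have [Hm Hj] := Hsub x y (SigSet_self _ Hx) (SigSet_self _ Hy).
    rewrite Ex Ey (HB a _ Hm).2 (HB a _ Hj).2; exact: Hmod (SigSet_self _ Hx) (SigSet_self _ Hy).
have Hext : Sig_extendible D f.
  exists f; split.
    move=> x y /Hiff Dx /Hiff Dy; have [A B] := Hsl x y Dx Dy; by split; apply/Hiff.
  split; last by move=> s c e Hs Hinf He; case: (key s c e Hs Hinf He).
  case: Hval => Hmon Hmod; split.
  - move=> x y /Hiff Dx /Hiff Dy; exact: Hmon.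
  - move=> x y /Hiff Dx /Hiff Dy; exact: Hmod.
split=> //; split=> // c Dc; exact: Sig_val_self.
Qed.
End Close.
Section H2.
Context {d : Order.disp_t} {V : latticeType d} {E : porderZmodType} {W : Type}
  (R : W -> W -> Prop) (wfR : well_founded R) (L : V -> Prop) (phi : V -> E).
Local Notation H := (hier wfR L phi).
Hypothesis Hord : omega1_order R.
Hypothesis HPi : forall a, lext (H a).1.

Lemma succ_unfold a a' : R a a' -> (forall g, R g a' -> ~ R a g) ->
  H a' = (PiL (H a).2, SigL (H a).1).
Proof.
move=> Ra Hm; case: (hier_cases wfR L phi a') => [[Hn _]|[[b [Rb [Hb ->]]]|[_ [Hl _]]]].
- by case: Hn; exists a.
- have -> : b = a; last by [].
  case: (R_tri Hord b a) => [Rba|[//|Rab]].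
  + by case: (Hb a Ra).
  + by case: (Hm b Rb).
- have [g [Rg Rag]] := Hl a Ra; by case: (Hm g Rg).
Qed.

Lemma ext_all a : lext (H a).2 /\ Pi_extendible (ldom (H a).2) (lval (H a).2).
Proof.
have [a' [Ra Hm]] := succ_exists wfR Hord a.
have := HPi a'; by rewrite (succ_unfold Ra Hm).
Qed.

Lemma extX a : Pi_extendible (ldom (H a).2) (lval (H a).2).
Proof. exact: (ext_all a).2. Qed.

Lemma extY a : Sig_extendible (ldom (H a).1) (lval (H a).1).
Proof.
have [a' [Ra Hm]] := succ_exists wfR Hord a.
have := (ext_all a').1; by rewrite (succ_unfold Ra Hm) => -[].
Qed.

Definition four b a := lsub (H b).1 (H a).1 /\ lsub (H b).1 (H a).2 /\
                       lsub (H b).2 (H a).1 /\ lsub (H b).2 (H a).2.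

Lemma step1 b : (forall c, R c b -> four c b) ->
  lsub (H b).1 (PiL (H b).2) /\ lsub (H b).2 (SigL (H b).1).
Proof.
move=> IH; have Xb := extX b; have Yb := extY b.
case: (hier_cases wfR L phi b) => [[_ Hb]|[[g [Rg [_ Hb]]]|[_ [_ Hb]]]].
- have -> : (H b).1 = base_level L phi by rewrite Hb.
  have -> : (H b).2 = base_level L phi by rewrite Hb.
  rewrite Hb /= in Xb Yb.
  by split; [exact: lsub_PiL_self | exact: lsub_SigL_self].
- have [_ [_ [_ S22]]] := IH g Rg; have [S11 _] := IH g Rg.
  split.
  + have -> : (H b).1 = PiL (H g).2 by rewrite Hb.
    exact: lsub_PiL.
  + have -> : (H b).2 = SigL (H g).1 by rewrite Hb.
    exact: lsub_SigL.
- split.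
  + have -> : (H b).1 = limL (fun s : {c | R c b} => (H (proj1_sig s)).1) by rewrite Hb.
    apply: limL_sub => -[c Rc] /=.
    apply: lsub_trans (lsub_PiL_self Xb); exact: (IH c Rc).2.1.
  + have -> : (H b).2 = limL (fun s : {c | R c b} => (H (proj1_sig s)).2) by rewrite Hb.
    apply: limL_sub => -[c Rc] /=.
    apply: lsub_trans (lsub_SigL_self Yb); exact: (IH c Rc).2.2.1.
Qed.

Lemma coh_lim (F : W -> @level d V E) a g (Rga : R g a) :
  (forall s t, R s a -> R t a -> R s t -> lsub (F s) (F t)) ->
  lsub (F g) (limL (fun s : {b | R b a} => F (proj1_sig s))).
Proof.
move=> Hc; refine (@sub_limL d V E _ (fun s : {b | R b a} => F (proj1_sig s)) (exist _ g Rga) _).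
move=> [t Rt] x /= Hg Ht.
case: (R_tri Hord t g) => [Rtg|[->//|Rgt]].
- by have [_ ->] := Hc t g Rt Rga Rtg x Ht.
- by have [_ ->] := Hc g t Rga Rt Rgt x Hg.
Qed.

Lemma coh a : forall b, R b a -> four b a.
Proof.
elim/(well_founded_ind wfR): a => a IH b Rba.
case: (hier_cases wfR L phi a) => [[Hn _]|[[g [Rg [Hg Ha]]]|[_ [Hl Ha]]]].
- by case: Hn; exists b.
- have [Sg1 Sg2] := step1 (IH g Rg).
  have A1 : (H a).1 = PiL (H g).2 by rewrite Ha.
  have A2 : (H a).2 = SigL (H g).1 by rewrite Ha.
  have Fg : four g a.
    rewrite /four A1 A2; split; first exact: Sg1.
    split; first exact: lsub_SigL_self (extY g).
    split; first exact: lsub_PiL_self (extX g).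
    exact: Sg2.
  case: (R_tri Hord b g) => [Rbg|[->//|Rgb]]; last by case: (Hg b Rba).
  have [B1 [B2 [B3 B4]]] := IH g Rg b Rbg.
  case: Fg => [C1 [C2 [C3 C4]]].
  split; [exact: lsub_trans B1 C1|split; [exact: lsub_trans B1 C2|split;
    [exact: lsub_trans B4 C3|exact: lsub_trans B4 C4]]].
- have [g [Rga Rbg]] := Hl b Rba.
  have [B1 [B2 [B3 B4]]] := IH g Rga b Rbg.
  have L1 : lsub (H g).1 (H a).1.
    have -> : (H a).1 = limL (fun s : {c | R c a} => (H (proj1_sig s)).1) by rewrite Ha.
    apply: (coh_lim (F := fun c => (H c).1)) => // s t Rs Rt Rst; exact: (IH t Rt s Rst).1.
  have L2 : lsub (H g).2 (H a).2.
    have -> : (H a).2 = limL (fun s : {c | R c a} => (H (proj1_sig s)).2) by rewrite Ha.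
    apply: (coh_lim (F := fun c => (H c).2)) => // s t Rs Rt Rst; exact: (IH t Rt s Rst).2.2.2.
  split; [exact: lsub_trans B1 L1|split; [exact: lsub_trans B2 L2|split;
    [exact: lsub_trans B3 L1|exact: lsub_trans B4 L2]]].
Qed.

Lemma top_sub (F : W -> @level d V E) a :
  (forall s t, R s t -> lsub (F s) (F t)) -> lsub (F a) (limL F).
Proof.
move=> Hc; apply: sub_limL => t x Ha Ht.
case: (R_tri Hord t a) => [Rta|[->//|Rat]].
- by have [_ ->] := Hc t a Rta x Ht.
- by have [_ ->] := Hc a t Rat x Ha.
Qed.

Lemma HA_gen (F S : W -> @level d V E) :
  (forall s t, R s t -> lsub (F s) (S t)) ->
  forall s : nat -> V, (forall n, ldom (limL F) (s n)) ->
  exists a, forall n, ldom (S a) (s n) /\ lval (limL F) (s n) = lval (S a) (s n).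
Proof.
move=> Hc s Hs.
pose i n := proj1_sig (constructive_indefinite_description _ (limL_chosen (Hs n))).
have Hi : forall n, ldom (F (i n)) (s n) /\ lval (limL F) (s n) = lval (F (i n)) (s n).
  move=> n; exact: (proj2_sig (constructive_indefinite_description _ (limL_chosen (Hs n)))).
have [a Ha] := bound Hord i.
exists a => n; have [D1 E1] := Hi n; have [D2 E2] := Hc _ _ (Ha n) _ D1.
by split=> //; rewrite E1 E2.
Qed.

End H2.

Theorem lemma5p32 (d : Order.disp_t) (V : latticeType d) (E : porderZmodType)
  (L : V -> Prop) (phi : V -> E)
  (W : Type) (R : W -> W -> Prop) (wfR : well_founded R) :
  sigma_distributive V -> sublattice L ->
  po_group E -> R_complete E -> valuation L phi ->
  omega1_order R ->
  (* phi is Pi_{aleph_1}-extendible *)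
  lext (Pi_top wfR L phi) ->
  (* the hierarchy has collapsed at Pi_{aleph_1} phi *)
  collapsed_at (Pi_top wfR L phi) (Sig_top wfR L phi) (Pi_top wfR L phi).
Proof.
move=> _ _ _ _ _ Hord HPi.
have HPi' : forall a, lext (hier wfR L phi a).1 := HPi.
have C := coh Hord HPi'.
have X := extX Hord HPi'. have Y := extY Hord HPi'.
have F1 : forall s t, R s t -> lsub (hier wfR L phi s).1 (hier wfR L phi t).1.
  by move=> s t h; case: (C t s h).
have F2 : forall s t, R s t -> lsub (hier wfR L phi s).2 (hier wfR L phi t).2.
  by move=> s t h; case: (C t s h) => _ [_ [_ ?]].
have F12 : forall s t, R s t -> lsub (hier wfR L phi s).1 (hier wfR L phi t).2.
  by move=> s t h; case: (C t s h) => _ [? _].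
have F21 : forall s t, R s t -> lsub (hier wfR L phi s).2 (hier wfR L phi t).1.
  by move=> s t h; case: (C t s h) => _ [_ [? _]].
have TP : forall a, lsub (hier wfR L phi a).1 (Pi_top wfR L phi).
  move=> a; exact: (@top_sub _ _ _ _ R Hord (fun a => (hier wfR L phi a).1) a F1).
have TS : forall a, lsub (hier wfR L phi a).2 (Sig_top wfR L phi).
  move=> a; exact: (@top_sub _ _ _ _ R Hord (fun a => (hier wfR L phi a).2) a F2).
have Hsucc : forall a, exists a', R a a' /\
    hier wfR L phi a' = (PiL (hier wfR L phi a).2, SigL (hier wfR L phi a).1).
  move=> a; have [a' [Ra Hm]] := succ_exists wfR Hord a.
  exists a'; split=> //; exact: succ_unfold.
have HB1 : forall a c, PiSet (ldom (hier wfR L phi a).2) (lval (hier wfR L phi a).2) c ->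
    ldom (Pi_top wfR L phi) c /\ lval (Pi_top wfR L phi) c = Pi_val (ldom (hier wfR L phi a).2) (lval (hier wfR L phi a).2) c.
  move=> a c Hc; have [a' [Ra Ea]] := Hsucc a.
  have M : ldom (hier wfR L phi a').1 c by rewrite Ea.
  have [D1 E1] := TP a' c M; split=> //; by rewrite E1 Ea.
have HB2 : forall a c, SigSet (ldom (hier wfR L phi a).1) (lval (hier wfR L phi a).1) c ->
    ldom (Pi_top wfR L phi) c /\ lval (Pi_top wfR L phi) c = Sig_val (ldom (hier wfR L phi a).1) (lval (hier wfR L phi a).1) c.
  move=> a c Hc; have [a' [Ra Ea]] := Hsucc a.
  have M : ldom (hier wfR L phi a').2 c by rewrite Ea.
  have [a'' [Ra' _]] := Hsucc a'.
  have [M2 E2] := F21 _ _ Ra' c M.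
  have [D1 E1] := TP a'' c M2; split=> //; by rewrite E1 E2 Ea.
have HB3 : forall a c, PiSet (ldom (hier wfR L phi a).2) (lval (hier wfR L phi a).2) c ->
    ldom (Sig_top wfR L phi) c /\ lval (Sig_top wfR L phi) c = Pi_val (ldom (hier wfR L phi a).2) (lval (hier wfR L phi a).2) c.
  move=> a c Hc; have [a' [Ra Ea]] := Hsucc a.
  have M : ldom (hier wfR L phi a').1 c by rewrite Ea.
  have [a'' [Ra' _]] := Hsucc a'.
  have [M2 E2] := F12 _ _ Ra' c M.
  have [D1 E1] := TS a'' c M2; split=> //; by rewrite E1 E2 Ea.
have [PE [PI PV]] := @Pi_close _ _ _ _ (ldom (Pi_top wfR L phi)) (lval (Pi_top wfR L phi))
   (fun a => (hier wfR L phi a).2) X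
   (@HA_gen _ _ _ _ R Hord (fun a => (hier wfR L phi a).1) (fun a => (hier wfR L phi a).2) F12) HB1.
have [SE [SI SV]] := @Sig_close _ _ _ _ (ldom (Pi_top wfR L phi)) (lval (Pi_top wfR L phi))
   (fun a => (hier wfR L phi a).1) Y
   (@HA_gen _ _ _ _ R Hord (fun a => (hier wfR L phi a).1) (fun a => (hier wfR L phi a).1) F1) HB2.
have [QE _] := @Pi_close _ _ _ _ (ldom (Sig_top wfR L phi)) (lval (Sig_top wfR L phi))
   (fun a => (hier wfR L phi a).2) X
   (@HA_gen _ _ _ _ R Hord (fun a => (hier wfR L phi a).2) (fun a => (hier wfR L phi a).2) F2) HB3.
split.
  split; last exact: QE.
  move=> i; exact: (ext_all Hord HPi' i).1.
split; first by split.
by do 5 (split=> //).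
Qed.
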